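(* Let $l,m,n$ be positive integers with $l > m\geq n\geq \frac{l}{2}$, and let $c_1,c_2\in\mathbb{Q}$ be constants. For $0\le k\le m$ and $r\in\{1,2\}$ write $$U_k^{(r)}:=c_1\bigl(H_{k+n}^{(r)} - H_{k+l-n-1}^{(r)}\bigr) + c_2 \bigl(H_{k+m}^{(r)} - H_{k+l-m-1}^{(r)}\bigr).$$ Then \begin{multline*} \sum_{k=0}^{n} \binom{m+k}{k} \binom{m}{k} \binom{n+k}{k} \binom{n}{k} \Bigl\{ \Bigl[1+k \bigl(H_{m+k}^{(1)} +H_{m-k}^{(1)} + H_{n+k}^{(1)} + H_{n-k}^{(1)} -4H_k^{(1)} \bigr)\Bigr] U_k^{(1)} - k\, U_k^{(2)} \Bigr\}\\ + \sum_{k=n+1}^{m} (-1)^{k-n} \binom{m+k}{k} \binom{m}{k} \binom{n+k}{k} \Big/ \binom{k-1}{n}\; U_k^{(1)} = 0. \end{multline*}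
   Context: For non-negative integers $i$ and $n$, the generalized harmonic sum is $H^{(i)}_{n}:=\sum_{j=1}^{n} j^{-i}$ for $n\ge 1$, and $H^{(i)}_{0}:=0$. An empty sum (e.g. the second sum when $m=n$) equals $0$. *)

(* Defs.v *)
From mathcomp Require Import all_boot all_order all_algebra.
Set Implicit Arguments. Unset Strict Implicit. Unset Printing Implicit Defensive.
Import Order.TTheory GRing.Theory Num.Theory.
Local Open Scope ring_scope.

Definition H (i n : nat) : rat := \sum_(1 <= j < n.+1) ((j%:R) ^+ i)^-1.

Definition U (c1 c2 : rat) (l m n : nat) (r k : nat) : rat :=
  c1 * (H r (k + n) - H r (k + l - n - 1)) + c2 * (H r (k + m) - H r (k + l - m - 1)).

(* Main.v *)
Require Import Defs.
From mathcomp Require Import all_boot all_order all_algebra.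
From mathcomp Require Import ring lra zify.
Set Implicit Arguments. Unset Strict Implicit. Unset Printing Implicit Defensive.
Import Order.TTheory GRing.Theory Num.Theory.
Local Open Scope ring_scope.

Definition pp (s : seq rat) : {poly rat} := \prod_(x <- s) ('X - x%:P).

Lemma pp_cons a s : pp (a :: s) = ('X - a%:P) * pp s.
Proof. by rewrite /pp big_cons. Qed.
Lemma pp_nil : pp [::] = 1.
Proof. by rewrite /pp big_nil. Qed.
Lemma pp_cat s t : pp (s ++ t) = pp s * pp t.
Proof. by rewrite /pp big_cat. Qed.
Lemma pp_rem s a : a \in s -> pp s = ('X - a%:P) * pp (rem a s).
Proof. by move=> Ha; rewrite -pp_cons /pp; apply: perm_big; apply: perm_to_rem. Qed.
Lemma hornerpp s x : (pp s).[x] = \prod_(y <- s) (x - y).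
Proof. by rewrite /pp horner_prod; apply: eq_bigr => y _; rewrite hornerXsubC. Qed.
Lemma pp_neq0 s x : x \notin s -> (pp s).[x] != 0.
Proof.
elim: s => [|y s IH]; first by rewrite pp_nil hornerC oner_neq0.
rewrite in_cons negb_or => /andP[xy xs].
by rewrite pp_cons hornerM hornerXsubC mulf_neq0 ?subr_eq0 ?IH.
Qed.
Lemma derivpp s x : x \notin s ->
  (pp s)^`().[x] = (pp s).[x] * \sum_(y <- s) (x - y)^-1.
Proof.
elim: s => [|y s IH]; first by rewrite pp_nil big_nil derivC horner0 mulr0.
rewrite in_cons negb_or => /andP[xy xs].
rewrite pp_cons derivM derivXsubC mul1r !hornerE big_cons IH //.
have : x - y != 0 by rewrite subr_eq0.
move=> h. field. done.
Qed.
Lemma size_pp s : size (pp s) = (size s).+1.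
Proof. by rewrite /pp size_prod_XsubC. Qed.

Lemma remC (s : seq rat) a x : uniq s -> rem a (rem x s) = rem x (rem a s).
Proof.
move=> us; rewrite (rem_filter a) ?rem_uniq // (rem_filter x us).
rewrite (rem_filter x) ?rem_uniq // (rem_filter a us) -!filter_predI.
by apply: eq_filter => y /=; rewrite andbC.
Qed.

Definition Dp s1 s2 := pp (s1 ++ s2 ++ s2).
Lemma DpE s1 s2 : Dp s1 s2 = pp s1 * pp s2 * pp s2.
Proof. by rewrite /Dp !pp_cat mulrA. Qed.

Definition dterm (N E : {poly rat}) a :=
  (N^`().[a] * E.[a] - N.[a] * E^`().[a]) / (E.[a] ^+ 2).
Definition L s1 s2 N :=
  \sum_(a <- s1) N.[a] / (Dp (rem a s1) s2).[a]
  + \sum_(a <- s2) dterm N (Dp s1 (rem a s2)) a.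

Lemma LD s1 s2 P Q : L s1 s2 (P + Q) = L s1 s2 P + L s1 s2 Q.
Proof.
rewrite /L addrACA -!big_split /=; congr (_ + _); apply: eq_bigr => a _.
  by rewrite hornerD mulrDl.
by rewrite /dterm derivD !hornerD -mulrDl; congr (_ / _); ring.
Qed.
Lemma L0 s1 s2 : L s1 s2 0 = 0.
Proof.
by rewrite /L !big1 ?addr0 // => a _; rewrite /dterm ?deriv0 !horner0 !mul0r ?subrr ?mul0r.
Qed.

Lemma T1 (Q D' : {poly rat}) a x : x != a -> D'.[x] != 0 ->
  (('X - a%:P) * Q).[x] / (('X - a%:P) * D').[x] = Q.[x] / D'.[x].
Proof.
move=> xa hD; rewrite !hornerM hornerXsubC.
have : x - a != 0 by rewrite subr_eq0.
move=> h; field; apply/andP; split => //.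
Qed.
Lemma T2 (Q F : {poly rat}) a x : x != a -> F.[x] != 0 ->
  dterm (('X - a%:P) * Q) (('X - a%:P) * F) x = dterm Q F x.
Proof.
move=> xa hF; rewrite /dterm !derivM derivXsubC !mul1r !hornerD !hornerM !hornerXsubC.
have : x - a != 0 by rewrite subr_eq0.
move=> h; field; apply/andP; split => //.
Qed.

Lemma memR (s : seq rat) a x : uniq s -> (x \in rem a s) = (x != a) && (x \in s).
Proof. by move=> us; rewrite (mem_rem_uniq _ us) inE. Qed.

Lemma Red1 s1 s2 a Q : uniq s1 -> uniq s2 -> {in s1, forall x, x \notin s2} ->
  a \in s1 -> L s1 s2 (('X - a%:P) * Q) = L (rem a s1) s2 Q.
Proof.
move=> u1 u2 dis Ha; rewrite /L (big_rem a Ha) /= hornerM hornerXsubC subrr !mul0r add0r.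
congr (_ + _); apply: eq_big_seq => x Hx.
- move: Hx; rewrite memR // => /andP[xa xs1].
  have aR : a \in rem x s1 by rewrite memR // eq_sym xa.
  have -> : Dp (rem x s1) s2 = ('X - a%:P) * Dp (rem x (rem a s1)) s2.
    by rewrite !DpE (pp_rem aR) remC //; ring.
  rewrite T1 // pp_neq0 // !mem_cat negb_or memR ?rem_uniq // eqxx /=.
  by rewrite orbb dis.
- have xa : x != a by apply: contraTneq Hx => ->; rewrite dis.
  have xs1 : x \notin s1 by apply: contraTN Hx => /dis.
  have -> : Dp s1 (rem x s2) = ('X - a%:P) * Dp (rem a s1) (rem x s2).
    by rewrite !DpE (pp_rem Ha); ring.
  rewrite T2 // pp_neq0 // !mem_cat !negb_or memR // memR // eqxx /=.
  by rewrite (negbTE xs1) andbF.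
Qed.

Lemma Red2 s1 s2 a Q : uniq s1 -> uniq s2 -> {in s1, forall x, x \notin s2} ->
  a \in s2 -> L s1 s2 (('X - a%:P) * Q) = L (a :: s1) (rem a s2) Q.
Proof.
move=> u1 u2 dis Ha.
have as1 : a \notin s1 by apply: contraTN Ha => /dis.
rewrite /L big_cons (big_rem a Ha) /= eqxx.
rewrite addrCA addrA; congr (_ + _ + _).
- rewrite /dterm derivM derivXsubC mul1r !hornerD !hornerM !hornerXsubC subrr !mul0r.
  have hE : (Dp s1 (rem a s2)).[a] != 0.
    by rewrite pp_neq0 // !mem_cat (negbTE as1) memR // eqxx.
  rewrite addr0 subr0; field; done.
- apply: eq_big_seq => x Hx.
  have xa : x != a by apply: contraTneq Hx => ->.
  have ax : a != x by rewrite eq_sym.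
  rewrite (negbTE ax).
  have -> : Dp (rem x s1) s2 = ('X - a%:P) * Dp (a :: rem x s1) (rem a s2).
    by rewrite !DpE pp_cons (pp_rem Ha); ring.
  rewrite T1 // pp_neq0 // in_cons !mem_cat !negb_or xa memR // eqxx /=.
  by rewrite !memR // (negbTE (dis x Hx)) !andbF.
- apply: eq_big_seq => x Hx.
  move: Hx; rewrite memR // => /andP[xa xs2].
  have aR : a \in rem x s2 by rewrite memR // eq_sym xa.
  have xs1 : x \notin s1 by apply: contraTN xs2 => /dis.
  have -> : Dp s1 (rem x s2) = ('X - a%:P) * Dp (a :: s1) (rem x (rem a s2)).
    by rewrite !DpE pp_cons (pp_rem aR) remC //; ring.
  rewrite T2 // pp_neq0 // in_cons !mem_cat !negb_or xa (negbTE xs1).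
  by rewrite memR ?rem_uniq // eqxx.
Qed.

Lemma Red s1 s2 a : uniq s1 -> uniq s2 -> {in s1, forall x, x \notin s2} ->
  a \in s1 ++ s2 ->
  exists s1' s2', [/\ uniq s1', uniq s2', {in s1', forall x, x \notin s2'},
   ((size s1' + 2 * size s2').+1 = size s1 + 2 * size s2)%N &
   forall Q, L s1 s2 (('X - a%:P) * Q) = L s1' s2' Q].
Proof.
move=> u1 u2 dis; rewrite mem_cat => /orP[Ha|Ha].
- exists (rem a s1), s2; split => //.
  + exact: rem_uniq.
  + by move=> x /mem_rem /dis.
  + have pos : (0 < size s1)%N by case: (s1) Ha.
    rewrite size_rem //; move: pos; case: (size s1) => //= n _; lia.
  + by move=> Q; apply: Red1.
- have as1 : a \notin s1 by apply: contraTN Ha => /dis.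
  exists (a :: s1), (rem a s2); split => //.
  + by rewrite cons_uniq as1.
  + exact: rem_uniq.
  + move=> x; rewrite in_cons => /orP[/eqP ->|xs1]; first by rewrite memR // eqxx.
    by rewrite memR // (negbTE (dis x xs1)) andbF.
  + have pos : (0 < size s2)%N by case: (s2) Ha.
    rewrite size_rem //=; move: pos; case: (size s2) => //= n _; lia.
  + by move=> Q; apply: Red2.
Qed.

Lemma Lzero d : forall s1 s2 (N : {poly rat}), (size s1 + 2 * size s2 <= d)%N ->
  uniq s1 -> uniq s2 -> {in s1, forall x, x \notin s2} ->
  (size N < size s1 + 2 * size s2)%N -> L s1 s2 N = 0.
Proof.
elim: d => [|d IH] s1 s2 N hd u1 u2 dis hN.
  by move: hN hd; case: s1 u1 dis => [|??] ; case: s2 u2 => [|??] //=; lia.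
case: (eqVneq N 0) => [->|N0]; first exact: L0.
have sN := size_poly_gt0 N; rewrite N0 in sN.
case: (leqP (size s1 + 2 * size s2) 2) => hdd.
  have : (size N <= 1)%N by lia.
  move/size1_polyC => NE; rewrite NE.
  move: hN hdd u1 u2 dis; clear hd; case: s1 => [|a [|b [|? ?]]]; case: s2 => [|e [|? ?]] //= hN' hdd' u1' u2' dis'; try lia.
  - rewrite /L big_nil add0r big_cons big_nil addr0 /dterm.
    have d1 : (1 : {poly rat})^`() = 0 by rewrite -polyC1 derivC.
    by rewrite /= eqxx /Dp /= pp_nil d1 !hornerC derivC horner0 !mul0r mulr0 subrr mul0r.
  - by move: hN' sN; rewrite /= ltnS leqn0 => /eqP ->.
  - move: u1'; rewrite andbT mem_seq1 => ab.
    rewrite /L !big_cons !big_nil !addr0 /= eqxx.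
    have -> : (a == b) = false by apply/negbTE.
    rewrite eqxx !DpE /= !pp_cons.
    rewrite !pp_nil !mulr1 !hornerC !hornerXsubC.
    have : a - b != 0 by rewrite subr_eq0.
    move=> h; field.
    by rewrite h andbT -oppr_eq0 opprB.
have u12 : uniq (s1 ++ s2).
  rewrite cat_uniq u1 u2 andbT; apply/hasPn => x xs2; apply/negP => xs1.
  by move: (dis x xs1); rewrite xs2.
have [a [b [ha hb ab]]] : exists a b, [/\ a \in s1 ++ s2, b \in s1 ++ s2 & a != b].
  have hs : (1 < size (s1 ++ s2))%N by rewrite size_cat; lia.
  move: u12 hs; case E: (s1 ++ s2) => [|a [|b t]] //.
  - move=> u _; exists a, b; split; rewrite ?inE ?eqxx ?orbT //.
    by move: u; rewrite /= inE negb_or => /andP[/andP[]].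
have [s1a [s2a [ua1 ua2 disa sza Ra]]] := Red u1 u2 dis ha.
have [s1b [s2b [ub1 ub2 disb szb Rb]]] := Red u1 u2 dis hb.
set q := N %/ ('X - a%:P); set c := N.[a]; set k := c / (a - b).
have hNq : N = q * ('X - a%:P) + c%:P by rewrite {1}(divp_eq N ('X - a%:P)) modp_XsubC.
have eqN : N = ('X - a%:P) * (q - k%:P) + ('X - b%:P) * k%:P.
  have hc : c%:P = (a - b)%:P * k%:P.
    by rewrite -polyCM /k mulrC divfK // subr_eq0.
  by rewrite {1}hNq hc !polyCB; ring.
have sq : size q = (size N - 1)%N.
  by rewrite /q size_divp ?size_XsubC // -size_poly_eq0 size_XsubC.
have h1 := size_polyD q (- k%:P); rewrite size_polyN in h1.
have h2 := size_polyC_leq1 k.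
rewrite eqN LD Ra Rb !(IH _ _ _ _ ua1 ua2 disa) ?(IH _ _ _ _ ub1 ub2 disb) ?addr0 //; clearbody q k c; move: sN => /= sN.
- by rewrite -ltnS szb.
- by apply: leq_ltn_trans h2 _; rewrite -ltnS szb.
- by rewrite -ltnS sza.
- apply: leq_ltn_trans h1 _; rewrite gtn_max; apply/andP; split.
    by rewrite sq -ltnS sza; move: hN sN; case: (size N) => //= n h _; rewrite subn1.
  by apply: leq_ltn_trans h2 _; rewrite -ltnS sza.
Qed.

Lemma HS i p : H i p.+1 = H i p + ((p.+1)%:R ^+ i)^-1.
Proof. by rewrite /H big_nat_recr. Qed.
Lemma H0 i : H i 0 = 0.
Proof. by rewrite /H big_geq. Qed.

Lemma fact_neq0 p : (p`!%:R : rat) != 0.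
Proof. by rewrite pnatr_eq0 -lt0n fact_gt0. Qed.

Lemma PA a c x : (a + c <= x)%N ->
  \prod_(i <- iota a c) (x%:R - i%:R : rat) * (x - a - c)`!%:R = (x - a)`!%:R.
Proof.
elim: c a => [|c IH] a h; first by rewrite big_nil mul1r subn0.
rewrite /= big_cons -mulrA.
have -> : (x - a - c.+1 = x - a.+1 - c)%N by lia.
rewrite IH; last by lia.
rewrite -natrB; last by lia.
have -> : (x - a = (x - a.+1).+1)%N by lia.
by rewrite factS natrM.
Qed.

Lemma PB a c x : (x < a)%N ->
  \prod_(i <- iota a c) (x%:R - i%:R : rat) * (a - x - 1)`!%:R
  = (-1) ^+ c * (a + c - x - 1)`!%:R.
Proof.
elim: c a => [|c IH] a h; first by rewrite big_nil mul1r expr0 mul1r addn0.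
rewrite /= big_cons.
have e3 : (x%:R - a%:R : rat) = - ((a - x - 1).+1)%:R.
  have -> : ((a - x - 1).+1 = a - x)%N by lia.
  by rewrite natrB ?opprB //; lia.
have e1 : ((a - x - 1).+1 = a.+1 - x - 1)%N by lia.
have e2 : (a + c.+1 - x - 1 = a.+1 + c - x - 1)%N by lia.
have IH' := IH a.+1 (ltn_trans h (ltnSn a)).
rewrite -e1 -e2 factS natrM in IH'.
by rewrite e3 exprS -[RHS]mulrA -IH'; ring.
Qed.

Lemma PC c x :
  \prod_(i <- iota 1 c) (x%:R + i%:R : rat) * x`!%:R = (x + c)`!%:R.
Proof.
elim: c => [|c IH]; first by rewrite big_nil mul1r addn0.
have -> : iota 1 c.+1 = iota 1 c ++ [:: c.+1].
  by rewrite -[in LHS](addn1 c) iotaD add1n.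
rewrite big_cat big_seq1 /= mulrAC IH addnS factS natrM -natrD addnS mulrC.
by [].
Qed.

Lemma SA a c x : (a + c <= x)%N ->
  \sum_(i <- iota a c) (x%:R - i%:R : rat)^-1 = H 1 (x - a) - H 1 (x - a - c).
Proof.
elim: c a => [|c IH] a h; first by rewrite big_nil subn0 subrr.
rewrite /= big_cons.
have -> : (x - a - c.+1 = x - a.+1 - c)%N by lia.
rewrite IH; last by lia.
rewrite -natrB; last by lia.
have -> : (x - a = (x - a.+1).+1)%N by lia.
by rewrite HS expr1; ring.
Qed.

Lemma SB a c x : (x < a)%N ->
  \sum_(i <- iota a c) (x%:R - i%:R : rat)^-1
  = H 1 (a - x - 1) - H 1 (a + c - x - 1).
Proof.
elim: c a => [|c IH] a h; first by rewrite big_nil addn0 subrr.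
rewrite /= big_cons.
have e3 : (x%:R - a%:R : rat) = - ((a - x - 1).+1)%:R.
  have -> : ((a - x - 1).+1 = a - x)%N by lia.
  by rewrite natrB ?opprB //; lia.
have e1 : (a.+1 - x - 1 = (a - x - 1).+1)%N by lia.
have e2 : (a + c.+1 - x - 1 = a.+1 + c - x - 1)%N by lia.
rewrite e3 IH; last by lia.
by rewrite e1 e2 HS expr1 invrN; ring.
Qed.

Lemma SC c x :
  \sum_(i <- iota 1 c) (x%:R + i%:R : rat)^-1 = H 1 (x + c) - H 1 x.
Proof.
elim: c => [|c IH]; first by rewrite big_nil addn0 subrr.
have -> : iota 1 c.+1 = iota 1 c ++ [:: c.+1].
  by rewrite -[in LHS](addn1 c) iotaD add1n.
rewrite big_cat big_seq1 /= IH addnS HS expr1 -natrD addnS; ring.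
Qed.

Definition nr (s : seq nat) : seq rat := map (fun i => i%:R) s.
Definition ng (s : seq nat) : seq rat := map (fun i => - i%:R) s.

Lemma rem_nr s k : rem (k%:R : rat) (nr s) = nr (rem k s).
Proof.
elim: s => [|y s IH] //=; rewrite eqr_nat.
by case: eqP => //= _; rewrite IH.
Qed.

Lemma remIota a c k : (a <= k < a + c)%N ->
  rem k (iota a c) = iota a (k - a) ++ iota k.+1 (a + c - k.+1).
Proof.
elim: c a => [|c IH] a /andP[h1 h2]; first by lia.
rewrite /=; case: eqP => [<-|ne].
  by rewrite subnn /= addnS subSS addKn.
have -> : (k - a = (k - a.+1).+1)%N by lia.
rewrite /= IH ?addSnnS //; apply/andP; split; lia.
Qed.

Lemma hornerpp_map (f : nat -> rat) s x :
  (pp (map f s)).[x] = \prod_(i <- s) (x - f i).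
Proof. by rewrite hornerpp big_map. Qed.

Lemma solveP (P F G : rat) : F != 0 -> P * F = G -> P = G / F.
Proof. by move=> hF <-; rewrite mulfK. Qed.

Lemma binR a b : (b <= a)%N ->
  ('C(a, b)%:R : rat) = a`!%:R / (b`!%:R * (a - b)`!%:R).
Proof.
move=> h; apply: solveP; first by rewrite mulf_neq0 ?fact_neq0.
by rewrite -!natrM bin_fact.
Qed.

Definition s1n m n := nr (iota n.+1 (m - n)).
Definition s2n n := nr (iota 0 n.+1).
Definition Ml m n j := ng (rem j (iota 1 m)) ++ ng (iota 1 n).
Definition Mp m n j := pp (Ml m n j).
Definition Np m n j := 'X * Mp m n j.

Lemma natD_neq0 k j : (0 < j)%N -> (k%:R + j%:R : rat) != 0.
Proof. by move=> h; rewrite -natrD pnatr_eq0; lia. Qed.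

Lemma Mval m n j k : (1 <= j <= m)%N ->
  (Mp m n j).[k%:R] = (m + k)`!%:R * (n + k)`!%:R / ((k%:R + j%:R) * k`!%:R * k`!%:R).
Proof.
move=> /andP[j1 jm].
rewrite /Mp /Ml pp_cat hornerM !hornerpp_map.
under eq_bigr do rewrite opprK.
under [X in _ * X]eq_bigr do rewrite opprK.
have hj : j \in iota 1 m by rewrite mem_iota; lia.
have h1 := PC m k; rewrite (big_rem j hj) /= in h1.
have h2 := PC n k.
rewrite (addnC m) (addnC n) -h1 -h2.
have := natD_neq0 k j1; have := fact_neq0 k.
move=> ? ?; field.
by apply/andP; split.
Qed.

Lemma Msum m n j k : (1 <= j <= m)%N ->
  \sum_(y <- Ml m n j) (k%:R - y)^-1
  = H 1 (m + k) - H 1 k - (k%:R + j%:R)^-1 + (H 1 (n + k) - H 1 k).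
Proof.
move=> /andP[j1 jm].
rewrite /Ml big_cat !big_map.
rewrite [X in X + _ = _](eq_bigr (fun i => (k%:R + i%:R)^-1)) => [|i _]; last by rewrite opprK.
rewrite [X in _ + X = _](eq_bigr (fun i => (k%:R + i%:R)^-1)) => [|i _]; last by rewrite opprK.
have hj : j \in iota 1 m by rewrite mem_iota; lia.
have h1 := SC m k; rewrite (big_rem j hj) /= in h1.
have h2 := SC n k.
rewrite (addnC m) (addnC n) -h2.
have -> : H 1 (k + m) = (H 1 (k + m) - H 1 k) + H 1 k by ring.
rewrite -h1; ring.
Qed.

Lemma notin_Ml m n j k : (k%:R : rat) \notin Ml m n j.
Proof.
rewrite /Ml mem_cat negb_or; apply/andP; split; apply/mapP => -[i hi /eqP].
  move: hi => /mem_rem; rewrite mem_iota => /andP[h _].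
  by rewrite -subr_eq0 opprK -natrD pnatr_eq0; lia.
move: hi; rewrite mem_iota => /andP[h _].
by rewrite -subr_eq0 opprK -natrD pnatr_eq0; lia.
Qed.

Lemma nr_cat s t : nr (s ++ t) = nr s ++ nr t.
Proof. exact: map_cat. Qed.

Lemma rem2 n k : (k <= n)%N ->
  rem (k%:R : rat) (s2n n) = nr (iota 0 k) ++ nr (iota k.+1 (n - k)).
Proof.
move=> h; rewrite /s2n rem_nr remIota; last by apply/andP; split; lia.
by rewrite subn0 add0n subSS nr_cat.
Qed.

Lemma rem1 m n k : (n < k <= m)%N ->
  rem (k%:R : rat) (s1n m n) = nr (iota n.+1 (k - n.+1)) ++ nr (iota k.+1 (m - k)).
Proof.
move=> /andP[h1 h2]; rewrite /s1n rem_nr remIota; last by apply/andP; split; lia.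
have -> : (n.+1 + (m - n) - k.+1 = m - k)%N by lia.
by rewrite nr_cat.
Qed.

Lemma P1val m n k : (k <= n <= m)%N ->
  (pp (s1n m n)).[k%:R] = (-1) ^+ (m - n) * (m - k)`!%:R / (n - k)`!%:R.
Proof.
move=> /andP[h1 h2]; rewrite hornerpp_map; apply: solveP; first exact: fact_neq0.
have := PB (m - n) (a := n.+1) (x := k); rewrite ltnS => /(_ h1).
have -> : (n.+1 - k - 1 = n - k)%N by lia.
by have -> : (n.+1 + (m - n) - k - 1 = m - k)%N by lia.
Qed.

Lemma P2val n k : (k <= n)%N ->
  (pp (rem (k%:R : rat) (s2n n))).[k%:R] = k`!%:R * ((-1) ^+ (n - k) * (n - k)`!%:R).
Proof.
move=> h; rewrite rem2 // pp_cat hornerM !hornerpp_map.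
have h1 := PA (a := 0) (c := k) (x := k) (leqnn _).
rewrite subn0 subnn mulr1 in h1; rewrite h1.
have := PB (n - k) (a := k.+1) (x := k) (ltnSn _).
have -> : (k.+1 - k - 1 = 0)%N by lia.
have -> : (k.+1 + (n - k) - k - 1 = n - k)%N by lia.
by rewrite mulr1 => ->.
Qed.

Lemma P3val m n k : (n < k <= m)%N ->
  (pp (rem (k%:R : rat) (s1n m n))).[k%:R] = (k - n.+1)`!%:R * ((-1) ^+ (m - k) * (m - k)`!%:R).
Proof.
move=> /andP[h1 h2]; rewrite rem1 ?h1 ?h2 // pp_cat hornerM !hornerpp_map.
have := PA (a := n.+1) (c := k - n.+1) (x := k); rewrite subnKC // => /(_ (leqnn _)).
rewrite subnn mulr1 => ->.
have := PB (m - k) (a := k.+1) (x := k) (ltnSn _).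
have -> : (k.+1 - k - 1 = 0)%N by lia.
have -> : (k.+1 + (m - k) - k - 1 = m - k)%N by lia.
by rewrite mulr1 => ->.
Qed.

Lemma P4val n k : (n < k)%N ->
  (pp (s2n n)).[k%:R] = k`!%:R / (k - n.+1)`!%:R.
Proof.
move=> h; rewrite hornerpp_map; apply: solveP; first exact: fact_neq0.
have := PA (a := 0) (c := n.+1) (x := k) h.
by rewrite !subn0.
Qed.

Lemma S1val m n k : (k <= n <= m)%N ->
  \sum_(y <- s1n m n) (k%:R - y)^-1 = H 1 (n - k) - H 1 (m - k).
Proof.
move=> /andP[h1 h2]; rewrite big_map.
have := SB (m - n) (a := n.+1) (x := k); rewrite ltnS => /(_ h1) ->.
have -> : (n.+1 - k - 1 = n - k)%N by lia.
by have -> : (n.+1 + (m - n) - k - 1 = m - k)%N by lia.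
Qed.

Lemma S2val n k : (k <= n)%N ->
  \sum_(y <- rem (k%:R : rat) (s2n n)) (k%:R - y)^-1 = H 1 k - H 1 (n - k).
Proof.
move=> h; rewrite rem2 // big_cat !big_map.
rewrite (SA (a := 0) (c := k) (x := k) (leqnn _)) subn0 subnn.
rewrite (SB (n - k) (a := k.+1) (x := k) (ltnSn _)).
have -> : (k.+1 - k - 1 = 0)%N by lia.
have -> : (k.+1 + (n - k) - k - 1 = n - k)%N by lia.
by rewrite H0 subr0 sub0r.
Qed.

Definition Ak m n k : rat := ('C(m + k, k) * 'C(m, k) * 'C(n + k, k) * 'C(n, k))%:R.
Definition Hs m n k : rat :=
  H 1 (m + k) + H 1 (m - k) + H 1 (n + k) + H 1 (n - k) - 4 * H 1 k.

Lemma notin_s1 m n k : (k <= n)%N -> (k%:R : rat) \notin s1n m n.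
Proof.
move=> h; apply/mapP => -[i]; rewrite mem_iota => /andP[h1 _] /eqP.
by rewrite eqr_nat; lia.
Qed.

Lemma dterm2 m n j k : (1 <= j <= m)%N -> (k <= n <= m)%N ->
  dterm (Np m n j) (Dp (s1n m n) (rem (k%:R : rat) (s2n n))) k%:R
  = Ak m n k * ((1 + k%:R * Hs m n k) / (k%:R + j%:R)
                - k%:R / (k%:R + j%:R) ^+ 2) / (-1) ^+ (m - n).
Proof.
move=> hj /andP[hk hn].
set r := rem (k%:R : rat) (s2n n).
set E := Dp (s1n m n) r.
have u2 : uniq (s2n n) by rewrite map_inj_uniq ?iota_uniq // => x y /eqP; rewrite eqr_nat => /eqP.
have kr : (k%:R : rat) \notin r by rewrite mem_rem_uniqF.
have kE : (k%:R : rat) \notin s1n m n ++ r ++ r.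
  by rewrite !mem_cat !negb_or kr notin_s1.
have EnZ : E.[k%:R] != 0 by apply: pp_neq0.
have dE : E^`().[k%:R] = E.[k%:R] * ((H 1 (n - k) - H 1 (m - k)) + 2 * (H 1 k - H 1 (n - k))).
  rewrite /E /Dp derivpp // !big_cat S1val ?hk ?hn // /r S2val //=; congr (_ * _); ring.
have hM := Mval n k hj.
have dN : (Np m n j)^`().[k%:R] = (Mp m n j).[k%:R] *
    (1 + k%:R * (H 1 (m + k) - H 1 k - (k%:R + j%:R)^-1 + (H 1 (n + k) - H 1 k))).
  rewrite /Np derivM derivX mul1r hornerD mulrC hornerMX /Mp derivpp ?notin_Ml //.
  by rewrite -/(Mp m n j) (Msum n k hj); ring.
have hN : (Np m n j).[k%:R] = k%:R * (Mp m n j).[k%:R] by rewrite /Np mulrC hornerMX mulrC.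
rewrite /dterm dN hN dE.
have Ev : E.[k%:R] = (-1) ^+ (m - n) * (m - k)`!%:R / (n - k)`!%:R
                      * (k`!%:R ^+ 2 * (n - k)`!%:R ^+ 2).
  rewrite /E DpE !hornerM P1val ?hk ?hn // /r P2val //.
  set t : rat := (-1) ^+ (n - k).
  have tt : t * t = 1 by rewrite -expr2 sqrr_sign.
  by rewrite -[RHS]mulr1 -tt; ring.
rewrite Ev hM /Ak /Hs !natrM binR ?leq_addl // addnK binR ?(leq_trans hk hn) //.
rewrite binR ?leq_addl // addnK binR //.
have := natD_neq0 k (j := j) (proj1 (andP hj)).
have := fact_neq0 k; have := fact_neq0 m; have := fact_neq0 n.
have := fact_neq0 (m - k); have := fact_neq0 (n - k).
have := fact_neq0 (m + k); have := fact_neq0 (n + k).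
have sg : (-1) ^+ (m - n) != 0 :> rat by rewrite signr_eq0.
move=> *; field.
by rewrite sg natD_neq0 ?fact_neq0 //; case/andP: hj.
Qed.

Definition Bk m n k : rat :=
  (-1) ^+ (k - n) * ('C(m + k, k) * 'C(m, k) * 'C(n + k, k))%:R / 'C(k.-1, n)%:R.

Lemma term1 m n j k : (1 <= j <= m)%N -> (n < k <= m)%N ->
  (Np m n j).[k%:R] / (Dp (rem (k%:R : rat) (s1n m n)) (s2n n)).[k%:R]
  = Bk m n k / (k%:R + j%:R) / (-1) ^+ (m - n).
Proof.
move=> hj hk; have /andP[hk1 hk2] := hk.
have hN : (Np m n j).[k%:R] = k%:R * (Mp m n j).[k%:R] by rewrite /Np mulrC hornerMX mulrC.
rewrite hN (Mval n k hj) DpE !hornerM (P3val hk) (P4val hk1).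
have k0 : (0 < k)%N by lia.
have kf : k`!%:R = k%:R * (k.-1)`!%:R :> rat.
  by rewrite -natrM; congr (_%:R); rewrite -{1}(prednK k0) factS (prednK k0).
have e1 : (k.-1 - n = k - n.+1)%N by rewrite subnS -!subn1 subnAC.
have e2 : (-1) ^+ (m - n) = (-1) ^+ (k - n) * (-1) ^+ (m - k) :> rat.
  by rewrite -exprD; congr (_ ^+ _); lia.
rewrite /Bk !natrM binR ?leq_addl // addnK binR // binR ?leq_addl // addnK.
rewrite binR; last by lia.
rewrite e1 e2 kf.
have := natD_neq0 k (j := j) (proj1 (andP hj)).
have := fact_neq0 (k.-1); have := fact_neq0 m; have := fact_neq0 n.
have := fact_neq0 (m - k); have := fact_neq0 (k - n.+1).
have := fact_neq0 (m + k); have := fact_neq0 (n + k).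
have sg1 : (-1) ^+ (m - k) != 0 :> rat by rewrite signr_eq0.
have sg2 : (-1) ^+ (k - n) != 0 :> rat by rewrite signr_eq0.
have kn0 : k%:R != 0 :> rat by rewrite pnatr_eq0 -lt0n.
move=> *; field.
by rewrite sg1 sg2 kn0 natD_neq0 ?fact_neq0 //; case/andP: hj.
Qed.

Lemma Tzero m n j : (1 <= j <= m)%N -> (n <= m)%N ->
  \sum_(0 <= k < n.+1) Ak m n k * ((1 + k%:R * Hs m n k) / (k%:R + j%:R)
                - k%:R / (k%:R + j%:R) ^+ 2)
  + \sum_(n.+1 <= k < m.+1) Bk m n k / (k%:R + j%:R) = 0.
Proof.
move=> hj hn.
have nrinj : injective (fun i : nat => (i%:R : rat)).
  by move=> x y /eqP; rewrite eqr_nat => /eqP.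
have u1 : uniq (s1n m n) by rewrite map_inj_uniq ?iota_uniq.
have u2 : uniq (s2n n) by rewrite map_inj_uniq ?iota_uniq.
have dis : {in s1n m n, forall x, x \notin s2n n}.
  move=> x /mapP[i]; rewrite mem_iota => /andP[h1 _] ->.
  apply/mapP => -[i']; rewrite mem_iota => /andP[_ h2] /nrinj; lia.
have NE : Np m n j = pp (0 :: Ml m n j) by rewrite pp_cons subr0.
have hj' : j \in iota 1 m by rewrite mem_iota; lia.
have sz : (size (Np m n j) < size (s1n m n) + 2 * size (s2n n))%N.
  rewrite NE size_pp /= /Ml size_cat !size_map size_rem // !size_iota.
  case/andP: hj => h1 h2; clear -h1 h2 hn; case: m hn h2 => [|m] hn h2; [lia | rewrite /=; lia].
have HL := Lzero (leqnn _) u1 u2 dis sz.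
have sg : (-1) ^+ (m - n) != 0 :> rat by rewrite signr_eq0.
suff : L (s1n m n) (s2n n) (Np m n j) = (\sum_(0 <= k < n.+1) Ak m n k * ((1 + k%:R * Hs m n k) / (k%:R + j%:R)
                - k%:R / (k%:R + j%:R) ^+ 2)
  + \sum_(n.+1 <= k < m.+1) Bk m n k / (k%:R + j%:R)) / (-1) ^+ (m - n).
  by rewrite HL => /esym/eqP; rewrite mulf_eq0 invr_eq0 (negbTE sg) orbF => /eqP.
rewrite /L addrC mulrDl !big_distrl /index_iota subn0 subSS.
rewrite /s1n /s2n /nr !big_map.
congr (_ + _); apply: eq_big_seq => k; rewrite mem_iota => /andP[hk1 hk2].
  by apply: dterm2 => //; apply/andP; split; lia.
by apply: term1 => //; apply/andP; split; lia.
Qed.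

Lemma Hiota r x c : H r (x + c) - H r x = \sum_(i <- iota x.+1 c) ((i%:R : rat) ^+ r)^-1.
Proof.
elim: c => [|c IH]; first by rewrite addn0 subrr big_nil.
have -> : iota x.+1 c.+1 = iota x.+1 c ++ [:: (x.+1 + c)%N].
  by rewrite -[in LHS](addn1 c) iotaD.
rewrite big_cat big_seq1 /= -IH addnS HS addSn.
by rewrite addrAC.
Qed.

Lemma Hdiff r k a b : (1 <= a)%N -> (a <= b.+1)%N ->
  H r (k + b) - H r (k + a - 1)
  = \sum_(j <- iota a (b.+1 - a)) ((k%:R + j%:R : rat) ^+ r)^-1.
Proof.
move=> h1 h2.
have := Hiota r (k + a - 1) (b.+1 - a).
have -> : (k + a - 1 + (b.+1 - a) = k + b)%N by lia.
move=> ->.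
have -> : (k + a - 1).+1 = (k + a)%N by lia.
by rewrite iotaDl big_map; apply: eq_bigr => j _; rewrite natrD.
Qed.

Definition u1 (J : seq nat) k : rat := \sum_(j <- J) (k%:R + j%:R)^-1.
Definition u2 (J : seq nat) k : rat := \sum_(j <- J) ((k%:R + j%:R) ^+ 2)^-1.

Lemma Xsum m n (J : seq nat) : {in J, forall j, (1 <= j <= m)%N} -> (n <= m)%N ->
  \sum_(0 <= k < n.+1) Ak m n k * ((1 + k%:R * Hs m n k) * u1 J k - k%:R * u2 J k)
  + \sum_(n.+1 <= k < m.+1) Bk m n k * u1 J k = 0.
Proof.
move=> hJ hn.
rewrite /u1 /u2.
under eq_bigr do rewrite !mulr_sumr -sumrB mulr_sumr.
under [X in _ + X]eq_bigr do rewrite mulr_sumr.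
rewrite exchange_big [X in _ + X]exchange_big -big_split /=.
rewrite big1_seq // => j /andP[_ hj].
by rewrite -[RHS](Tzero (hJ j hj) hn).
Qed.

Lemma Uform r c1 c2 l m n k : (n <= m)%N -> (m < l)%N -> (l <= 2 * n)%N ->
  U c1 c2 l m n r k =
  c1 * \sum_(j <- iota (l - n) (n.+1 - (l - n))) ((k%:R + j%:R : rat) ^+ r)^-1
  + c2 * \sum_(j <- iota (l - m) (m.+1 - (l - m))) ((k%:R + j%:R : rat) ^+ r)^-1.
Proof.
move=> h1 h2 h3; rewrite /U.
have -> : (k + l - n - 1 = k + (l - n) - 1)%N by lia.
have -> : (k + l - m - 1 = k + (l - m) - 1)%N by lia.
by rewrite !Hdiff //; lia.
Qed.

Lemma main' (l m n : nat) (c1 c2 : rat) :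
  (0 < n)%N -> (m < l)%N -> (n <= m)%N -> (l <= 2 * n)%N ->
  \sum_(0 <= k < n.+1) Ak m n k *
     ((1 + k%:R * Hs m n k) * U c1 c2 l m n 1 k - k%:R * U c1 c2 l m n 2 k)
  + \sum_(n.+1 <= k < m.+1) Bk m n k * U c1 c2 l m n 1 k = 0.
Proof.
move=> h0 h1 h2 h3.
set J1 := iota (l - n) (n.+1 - (l - n)).
set J2 := iota (l - m) (m.+1 - (l - m)).
have hJ1 : {in J1, forall j, (1 <= j <= m)%N}.
  by move=> j; rewrite mem_iota => /andP[a b]; apply/andP; split; lia.
have hJ2 : {in J2, forall j, (1 <= j <= m)%N}.
  by move=> j; rewrite mem_iota => /andP[a b]; apply/andP; split; lia.
have E1 : forall k, U c1 c2 l m n 1 k = c1 * u1 J1 k + c2 * u1 J2 k.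
  move=> k; rewrite Uform // /u1.
have E2 : forall k, U c1 c2 l m n 2 k = c1 * u2 J1 k + c2 * u2 J2 k.
  by move=> k; rewrite Uform.
under eq_bigr do rewrite E1 E2.
under [X in _ + X]eq_bigr do rewrite E1.
pose S J := \sum_(0 <= k < n.+1) Ak m n k * ((1 + k%:R * Hs m n k) * u1 J k - k%:R * u2 J k)
  + \sum_(n.+1 <= k < m.+1) Bk m n k * u1 J k.
have X1 : S J1 = 0 := Xsum hJ1 h2.
have X2 : S J2 = 0 := Xsum hJ2 h2.
transitivity (c1 * S J1 + c2 * S J2); last by rewrite X1 X2 !mulr0 addr0.
rewrite /S !mulrDr !mulr_sumr addrACA -!big_split /=.
by congr (_ + _); apply: eq_bigr => k _; ring.
Qed.

Unset Implicit Arguments.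
Theorem theorem1p3 (l m n : nat) (c1 c2 : rat) :
  (0 < n)%N -> (m < l)%N -> (n <= m)%N -> (l <= 2 * n)%N ->
  \sum_(0 <= k < n.+1)
     (('C(m + k, k) * 'C(m, k) * 'C(n + k, k) * 'C(n, k))%:R : rat) *
     ((1 + k%:R * (H 1 (m + k) + H 1 (m - k) + H 1 (n + k) + H 1 (n - k)
                   - 4 * H 1 k)) * U c1 c2 l m n 1 k
      - k%:R * U c1 c2 l m n 2 k)
  + \sum_(n.+1 <= k < m.+1)
     (-1) ^+ (k - n) * (('C(m + k, k) * 'C(m, k) * 'C(n + k, k))%:R : rat)
       / ('C(k.-1, n)%:R) * U c1 c2 l m n 1 k
  = 0.
Proof. exact: main'. Qed.
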